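(* Let $S$ be a modal left $E$-monoid, and let $E'\subseteq E(S)$ with a bijection $E\to E'$, $e\mapsto e'$, such that $e\sim_r e'$ for all $e\in E$. Then $1\in E'$, $S$ is a modal left $E'$-monoid, and its left $E'$-modal operation satisfies $s\cdot e'=(s\cdot e)'$ for all $s\in S$, $e\in E$. If $S$ is an inductive left $E$-monoid, then it is an inductive left $E'$-monoid and $(e\wedge f)'=e'\wedge f'$ for all $e,f\in E$.
   Context: For a semigroup $S$, $E(S)$ is its set of idempotents; for $e,f\in E(S)$, $e\le_r f$ iff $e=ef$, and $e\sim_r f$ iff $e\le_r f$ and $f\le_r e$. $E\subseteq E(S)$ is right pre-reduced if $e=ef$ and $f=fe$ imply $e=f$ for $e,f\in E$. Let $S$ be a monoid and $1\in E\subseteq E(S)$. $S$ is a modal left $E$-monoid if $E$ is right pre-reduced and (I1') for all $t\in S$, $e\in E$ there is $t\cdot e\in E$ such that for all $s\in S$: $ste=st$ iff $s(t\cdot e)=s$; the (necessarily unique) map $(t,e)\mapsto t\cdot e$ is the left $E$-modal operation. $S$ is an inductive left $E$-monoid if it is a modal left $E$-monoid, $(E,\le_r)$ is a meet-semilattice with meet $\wedge$, and (I2') for $s\in S$, $e,f\in E$: $se=sf=s$ implies $s(e\wedge f)=s$. *)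

(* Defs.v *)
Section Defs.
Context {S : Type} (mul : S -> S -> S) (one : S).

Definition is_monoid : Prop :=
  (forall x y z, mul x (mul y z) = mul (mul x y) z) /\
  (forall x, mul one x = x) /\ (forall x, mul x one = x).

Definition idempotent (e : S) : Prop := mul e e = e.

Definition le_r (e f : S) : Prop := e = mul e f.

Definition sim_r (e f : S) : Prop := le_r e f /\ le_r f e.

Definition right_pre_reduced (E : S -> Prop) : Prop :=
  forall e f, E e -> E f -> e = mul e f -> f = mul f e -> e = f.

Definition is_modal_op (E : S -> Prop) (op : S -> S -> S) : Prop :=
  forall t e, E e ->
    E (op t e) /\
    (forall s, mul (mul s t) e = mul s t <-> mul s (op t e) = s).

Definition modal_left_monoid (E : S -> Prop) : Prop :=
  E one /\ (forall e, E e -> idempotent e) /\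
  right_pre_reduced E /\ exists op, is_modal_op E op.

Definition is_meet (E : S -> Prop) (m : S -> S -> S) : Prop :=
  forall e f, E e -> E f ->
    E (m e f) /\ le_r (m e f) e /\ le_r (m e f) f /\
    (forall g, E g -> le_r g e -> le_r g f -> le_r g (m e f)).

Definition I2 (E : S -> Prop) (m : S -> S -> S) : Prop :=
  forall s e f, E e -> E f -> mul s e = s -> mul s f = s -> mul s (m e f) = s.

Definition inductive_left_monoid (E : S -> Prop) : Prop :=
  modal_left_monoid E /\ exists m, is_meet E m /\ I2 E m.

End Defs.

(* Main.v *)
Require Import Defs.
From Stdlib Require Import ClassicalEpsilon.

Section H.
Context {S : Type} (mul : S -> S -> S) (one : S).
Hypothesis Hm : is_monoid mul one.

Lemma tr_r a b s : sim_r mul a b -> (mul s a = s <-> mul s b = s).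
Proof.
  destruct Hm as [A _]. intros [Ha Hb]; unfold le_r in *. split; intro H.
  - rewrite <- H at 1. rewrite <- A, <- Ha. exact H.
  - rewrite <- H at 1. rewrite <- A, <- Hb. exact H.
Qed.

Lemma le_tr_r x a b : sim_r mul a b -> (le_r mul x a <-> le_r mul x b).
Proof.
  intro H. unfold le_r. pose proof (tr_r a b x H).
  split; intro; symmetry; apply H0; auto.
Qed.

Lemma le_tr_l x a b : sim_r mul a b -> (le_r mul a x <-> le_r mul b x).
Proof.
  destruct Hm as [A _]. intros [Ha Hb]; unfold le_r in *. split; intro H.
  - rewrite Hb at 2. rewrite <- A, <- H. exact Hb.
  - rewrite Ha at 2. rewrite <- A, <- H. exact Ha.
Qed.
End H.

Theorem proposition5p5 (S : Type) (mul : S -> S -> S) (one : S)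
  (E E' : S -> Prop) (g : S -> S) :
  is_monoid mul one ->
  modal_left_monoid mul one E ->
  (forall e, E' e -> idempotent mul e) ->
  (* g restricts to a bijection E -> E', e |-> e' *)
  (forall e, E e -> E' (g e)) ->
  (forall e f, E e -> E f -> g e = g f -> e = f) ->
  (forall e', E' e' -> exists e, E e /\ g e = e') ->
  (forall e, E e -> sim_r mul e (g e)) ->
  E' one /\
  modal_left_monoid mul one E' /\
  (forall op op', is_modal_op mul E op -> is_modal_op mul E' op' ->
     forall s e, E e -> op' s (g e) = g (op s e)) /\
  (inductive_left_monoid mul one E ->
     inductive_left_monoid mul one E' /\
     (forall m m', is_meet mul E m -> is_meet mul E' m' ->
        forall e f, E e -> E f -> g (m e f) = m' (g e) (g f))).
Proof.
  intros Hm HE Hid HgE Hinj Hsurj Hsim.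
  pose proof Hm as [A [L1 R1]].
  destruct HE as [E1 [Eid [Erpr [op Hop]]]].
  assert (Hg1 : g one = one).
  { destruct (Hsim one E1) as [H2 _]. unfold le_r in H2. rewrite L1 in H2. symmetry; exact H2. }
  assert (E'1 : E' one) by (rewrite <- Hg1; auto).
  set (h := fun x => epsilon (inhabits one) (fun e => E e /\ g e = x)).
  assert (Hh : forall x, E' x -> E (h x) /\ g (h x) = x).
  { intros x Hx. unfold h. apply epsilon_spec. apply Hsurj; auto. }
  assert (rpr' : right_pre_reduced mul E').
  { intros x y Hx Hy H1 H2.
    destruct (Hh x Hx) as [ex gx]; destruct (Hh y Hy) as [ey gy].
    rewrite <- gx, <- gy in H1, H2 |- *. f_equal. apply Erpr; auto.
    - apply (le_tr_l mul one Hm _ _ _ (Hsim _ ex)).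
      apply (le_tr_r mul one Hm _ _ _ (Hsim _ ey)). exact H1.
    - apply (le_tr_l mul one Hm _ _ _ (Hsim _ ey)).
      apply (le_tr_r mul one Hm _ _ _ (Hsim _ ex)). exact H2. }
  assert (modop : forall op0, is_modal_op mul E op0 ->
            is_modal_op mul E' (fun t x => g (op0 t (h x)))).
  { intros op0 Hop0 t x Hx. destruct (Hh x Hx) as [ex gx].
    destruct (Hop0 t (h x) ex) as [Ho Hi]. split; auto.
    intro s. rewrite <- (tr_r mul one Hm _ _ _ (Hsim _ Ho)).
    rewrite <- Hi. rewrite <- gx at 1.
    symmetry. apply (tr_r mul one Hm _ _ _ (Hsim _ ex)). }
  split; [exact E'1|]. split.
  { split; [exact E'1|]. split; [exact Hid|]. split; [exact rpr'|].
    eexists. apply modop. exact Hop. }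
  split.
  { intros op1 op' Hop1 Hop' s e He.
    destruct (Hop1 s e He) as [Ho Hi].
    destruct (Hop' s (g e) (HgE _ He)) as [Ho' Hi'].
    assert (key : forall u, mul u (op' s (g e)) = u <-> mul u (g (op1 s e)) = u).
    { intro u. rewrite <- Hi'. rewrite <- (tr_r mul one Hm _ _ _ (Hsim _ Ho)).
      rewrite <- Hi. symmetry. apply (tr_r mul one Hm _ _ _ (Hsim _ He)). }
    apply rpr'; auto; unfold le_r.
    - symmetry. apply key. apply Hid; auto.
    - symmetry. apply key. apply Hid. auto. }
  intros [_ [m [Hmeet HI2]]].
  assert (meet' : is_meet mul E' (fun x y => g (m (h x) (h y)))).
  { intros x y Hx Hy. destruct (Hh x Hx) as [ex gx]; destruct (Hh y Hy) as [ey gy].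
    destruct (Hmeet _ _ ex ey) as [M1 [M2 [M3 M4]]].
    split; [auto|]. split; [|split].
    - rewrite <- gx at 2. apply (le_tr_r mul one Hm _ _ _ (Hsim _ ex)).
      apply (le_tr_l mul one Hm _ _ _ (Hsim _ M1)). auto.
    - rewrite <- gy at 2. apply (le_tr_r mul one Hm _ _ _ (Hsim _ ey)).
      apply (le_tr_l mul one Hm _ _ _ (Hsim _ M1)). auto.
    - intros z Hz H1 H2. destruct (Hh z Hz) as [ez gz]. rewrite <- gz in H1, H2 |- *.
      apply (le_tr_r mul one Hm _ _ _ (Hsim _ M1)).
      apply (le_tr_l mul one Hm _ _ _ (Hsim _ ez)).
      apply M4; auto.
      + apply (le_tr_l mul one Hm _ _ _ (Hsim _ ez)).
        apply (le_tr_r mul one Hm _ _ _ (Hsim _ ex)). rewrite gx. auto.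
      + apply (le_tr_l mul one Hm _ _ _ (Hsim _ ez)).
        apply (le_tr_r mul one Hm _ _ _ (Hsim _ ey)). rewrite gy. auto. }
  split.
  { split.
    - split; [exact E'1|]. split; [exact Hid|]. split; [exact rpr'|].
      eexists. apply modop. exact Hop.
    - eexists. split; [exact meet'|].
      intros s x y Hx Hy H1 H2. destruct (Hh x Hx) as [ex gx]; destruct (Hh y Hy) as [ey gy].
      destruct (Hmeet _ _ ex ey) as [M1 _].
      apply (tr_r mul one Hm _ _ _ (Hsim _ M1)). apply HI2; auto.
      + apply (tr_r mul one Hm _ _ _ (Hsim _ ex)). rewrite gx. auto.
      + apply (tr_r mul one Hm _ _ _ (Hsim _ ey)). rewrite gy. auto. }
  intros m1 m' Hm1 Hm' e f He Hf.
  destruct (Hm1 e f He Hf) as [M1 [M2 [M3 M4]]].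
  destruct (Hm' (g e) (g f) (HgE _ He) (HgE _ Hf)) as [N1 [N2 [N3 N4]]].
  destruct (Hh _ N1) as [ek gk]. rewrite <- gk in N1, N2, N3, N4 |- *.
  apply rpr'; auto.
  - apply N4; auto.
    + apply (le_tr_r mul one Hm _ _ _ (Hsim _ He)).
      apply (le_tr_l mul one Hm _ _ _ (Hsim _ M1)). auto.
    + apply (le_tr_r mul one Hm _ _ _ (Hsim _ Hf)).
      apply (le_tr_l mul one Hm _ _ _ (Hsim _ M1)). auto.
  - apply (le_tr_r mul one Hm _ _ _ (Hsim _ M1)).
    apply (le_tr_l mul one Hm _ _ _ (Hsim _ ek)).
    apply M4; auto.
    + apply (le_tr_l mul one Hm _ _ _ (Hsim _ ek)).
      apply (le_tr_r mul one Hm _ _ _ (Hsim _ He)). auto.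
    + apply (le_tr_l mul one Hm _ _ _ (Hsim _ ek)).
      apply (le_tr_r mul one Hm _ _ _ (Hsim _ Hf)). auto.
Qed.
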